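(* Let $\llbracket\cdot\rrbracket$ be the translation from Linda into CPC described in the context. For all Linda processes $P,P'$: if $P\to P'$ then $\llbracket P\rrbracket\to\llbracket P'\rrbracket$; and if $\llbracket P\rrbracket\to Q$ for a CPC process $Q$, then $Q=\llbracket P'\rrbracket$ for some Linda process $P'$ with $P\to P'$.
   Context: CPC: patterns $p ::= \lambda x \mid x \mid \ulcorner x\urcorner \mid p\bullet p$ (binding, variable, protected name, compound; $\bullet$ left associative); well formed (binding names distinct and disjoint from free names); communicable patterns contain no protected or binding names. Unification: $\{x\|x\}=\{x\|\ulcorner x\urcorner\}=\{\ulcorner x\urcorner\|x\}=\{\ulcorner x\urcorner\|\ulcorner x\urcorner\}=(\{\},\{\})$; $\{\lambda x\|q\}=(\{q/x\},\{\})$ and $\{q\|\lambda x\}=(\{\},\{q/x\})$ if $q$ communicable; $\{p_1\bullet p_2\|q_1\bullet q_2\}=(\sigma_1\cup\sigma_2,\rho_1\cup\rho_2)$ if $\{p_i\|q_i\}=(\sigma_i,\rho_i)$; undefined otherwise. Processes $P::=0\mid\checkmark\mid P|P\mid\,!P\mid(\nu x)P\mid p\to P$ (binding names of $p$ bind in $P$); structural congruence $\equiv$: least congruence with $\alpha$-conversion, $P|0\equiv P$, commutativity/associativity of $|$, $(\nu n)0\equiv0$, $(\nu n)(\nu m)P\equiv(\nu m)(\nu n)P$, $!P\equiv P|!P$, $P|(\nu n)Q\equiv(\nu n)(P|Q)$ for $n\notin{\sf fn}(P)$. Reduction: $(p\to P)|(q\to Q)\to\sigma P|\rho Q$ if $\{p\|q\}=(\sigma,\rho)$,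 closed under $|$, $(\nu n)$ and $\equiv$. Linda: processes $P::=0\mid\checkmark\mid\langle b_1,\ldots,b_k\rangle\mid(t_1,\ldots,t_k).P\mid(\nu n)P\mid P|Q\mid\,!P$ with $b_i$ names and template fields $t::=\lambda x\mid\ulcorner b\urcorner$ (input variables pairwise distinct). Matching: ${\sf Match}(;)=\{\}$, ${\sf Match}(\ulcorner b\urcorner;b)=\{\}$, ${\sf Match}(\lambda x;b)=\{b/x\}$, ${\sf Match}(t,\tilde t;b,\tilde b)=\sigma_1\uplus\sigma_2$ if ${\sf Match}(t;b)=\sigma_1$, ${\sf Match}(\tilde t;\tilde b)=\sigma_2$. Reduction: $\langle\tilde b\rangle|(\tilde t).P\to\sigma P$ if ${\sf Match}(\tilde t;\tilde b)=\sigma$, closed under parallel, restriction and the same structural congruence as CPC. The translation: fix a name $\mathsf c$; ${\sf patt}()=\lambda x\bullet\mathsf c$, ${\sf patt}(t,\tilde t)=t\bullet\mathsf c\bullet{\sf patt}(\tilde t)$, ${\sf patb}()=\mathsf c\bullet\lambda x$, ${\sf patb}(b,\tilde b)=b\bullet\lambda x\bullet{\sf patb}(\tilde b)$, with each $x$ a fresh name and each recursive call a single sub-pattern. Then $\llbracket(\tilde t).P\rrbracket={\sf patt}(\tilde t)\to\llbracket P\rrbracket$, $\llbracket\langle\tilde b\rangle\rrbracket={\sf patb}(\tilde b)\to0$, and $\llbracket\cdot\rrbracket$ is homomorphic on $0,\checkmark,|,!,(\nu n)$.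
   Formalization: The second part concludes Q ≡ ⟦P'⟧, structural congruence in place of the equality Q = ⟦P'⟧, for some Linda process P' with P → P'. The statement above fails without it. *)

(* Defs.v *)
(* Syntax of CPC and Linda in de Bruijn form:
   names are natural numbers (de Bruijn indices), so alpha-conversion is
   syntactic identity. *)
From Stdlib Require Import Arith List.
Import ListNotations.

(* p ::= \x | x | "x" | p . p                                             *)
(* Binding names are anonymous (de Bruijn); the names occurring in PVar   *)
(* and PProt refer to the enclosing context, so well-formedness (binding  *)
(* names distinct and disjoint from free names) holds by construction.    *)
Inductive pat : Type :=
  | PBind : pat
  | PVar  : nat -> pat
  | PProt : nat -> pat
  | PComp : pat -> pat -> pat.

(* P ::= 0 | ok | P|P | !P | (nu x)P | p -> P                           *)
(* In [Case p P], the j-th binding name of p (counting left to right from *)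
(* 0) is the index j in P; index i >= nbind p in P denotes the outer name *)
(* i - nbind p.  In [Nu P], index 0 of P is the restricted name.          *)
Inductive proc : Type :=
  | Zero : proc
  | Succ : proc                    (* the success process  ok     *)
  | Par  : proc -> proc -> proc
  | Rep  : proc -> proc
  | Nu   : proc -> proc
  | Case : pat -> proc -> proc.

Fixpoint nbind (p : pat) : nat :=
  match p with
  | PBind => 1
  | PVar _ | PProt _ => 0
  | PComp p q => nbind p + nbind q
  end.

Definition upn (k : nat) (r : nat -> nat) (i : nat) : nat :=
  if i <? k then i else k + r (i - k).

Fixpoint pren (r : nat -> nat) (p : pat) : pat :=
  match p with
  | PBind => PBind
  | PVar n => PVar (r n)
  | PProt n => PProt (r n)
  | PComp p q => PComp (pren r p) (pren r q)
  end.

Fixpoint ren (r : nat -> nat) (P : proc) : proc :=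
  match P with
  | Zero => Zero
  | Succ => Succ
  | Par P Q => Par (ren r P) (ren r Q)
  | Rep P => Rep (ren r P)
  | Nu P => Nu (ren (upn 1 r) P)
  | Case p P => Case (pren r p) (ren (upn (nbind p) r) P)
  end.

Fixpoint protect (p : pat) : pat :=
  match p with
  | PBind => PBind
  | PVar n => PProt n
  | PProt n => PProt n
  | PComp p q => PComp (protect p) (protect q)
  end.

Definition upsn (k : nat) (s : nat -> pat) (i : nat) : pat :=
  if i <? k then PVar i else pren (fun j => k + j) (s (i - k)).

Fixpoint psubst (s : nat -> pat) (p : pat) : pat :=
  match p with
  | PBind => PBind
  | PVar n => s n
  | PProt n => protect (s n)
  | PComp p q => PComp (psubst s p) (psubst s q)
  end.

Fixpoint subst (s : nat -> pat) (P : proc) : proc :=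
  match P with
  | Zero => Zero
  | Succ => Succ
  | Par P Q => Par (subst s P) (subst s Q)
  | Rep P => Rep (subst s P)
  | Nu P => Nu (subst (upsn 1 s) P)
  | Case p P => Case (psubst s p) (subst (upsn (nbind p) s) P)
  end.

Definition inst (vs : list pat) (i : nat) : pat :=
  if i <? length vs then nth i vs (PVar 0) else PVar (i - length vs).

Fixpoint communicable (p : pat) : bool :=
  match p with
  | PVar _ => true
  | PComp p q => communicable p && communicable q
  | _ => false
  end.

(* unification {p || q} = (sigma, rho): lists of values for the binding  *)
(* names of p, resp. q, in left-to-right order                          *)
Fixpoint unify (p q : pat) : option (list pat * list pat) :=
  match p, q with
  | PVar x, PVar y | PVar x, PProt y | PProt x, PVar y | PProt x, PProt y =>
      if Nat.eqb x y then Some ([], []) else None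
  | PBind, q => if communicable q then Some ([q], []) else None
  | p, PBind => if communicable p then Some ([], [p]) else None
  | PComp p1 p2, PComp q1 q2 =>
      match unify p1 q1, unify p2 q2 with
      | Some (s1, r1), Some (s2, r2) => Some (s1 ++ s2, r1 ++ r2)
      | _, _ => None
      end
  | _, _ => None
  end.

Definition swap01 (i : nat) : nat :=
  match i with 0 => 1 | 1 => 0 | i => i end.

Inductive ceq : proc -> proc -> Prop :=
  | ceq_refl P : ceq P P
  | ceq_sym P Q : ceq P Q -> ceq Q P
  | ceq_trans P Q R : ceq P Q -> ceq Q R -> ceq P R
  | ceq_par_l P P' Q : ceq P P' -> ceq (Par P Q) (Par P' Q)
  | ceq_par_r P Q Q' : ceq Q Q' -> ceq (Par P Q) (Par P Q')
  | ceq_rep P P' : ceq P P' -> ceq (Rep P) (Rep P')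
  | ceq_nu P P' : ceq P P' -> ceq (Nu P) (Nu P')
  | ceq_case p P P' : ceq P P' -> ceq (Case p P) (Case p P')
  | ceq_par_zero P : ceq (Par P Zero) P
  | ceq_par_comm P Q : ceq (Par P Q) (Par Q P)
  | ceq_par_assoc P Q R : ceq (Par P (Par Q R)) (Par (Par P Q) R)
  | ceq_nu_zero : ceq (Nu Zero) Zero
  | ceq_nu_nu P : ceq (Nu (Nu P)) (Nu (Nu (ren swap01 P)))
  | ceq_rep_unfold P : ceq (Rep P) (Par P (Rep P))
  (* P | (nu n)Q == (nu n)(P | Q), n not free in P *)
  | ceq_extr P Q : ceq (Par P (Nu Q)) (Nu (Par (ren S P) Q)).

Inductive cred : proc -> proc -> Prop :=
  | cred_comm p P q Q s r :
      unify p q = Some (s, r) ->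
      cred (Par (Case p P) (Case q Q)) (Par (subst (inst s) P) (subst (inst r) Q))
  | cred_par P P' Q : cred P P' -> cred (Par P Q) (Par P' Q)
  | cred_nu P P' : cred P P' -> cred (Nu P) (Nu P')
  | cred_struct P Q Q' P' : ceq P Q -> cred Q Q' -> ceq Q' P' -> cred P P'.

Inductive field : Type :=
  | TBind : field
  | TProt : nat -> field.

(* In [LIn ts P], the j-th input variable of ts (left to right, from 0)   *)
(* is index j in P; index i >= nbindT ts denotes outer name i - nbindT ts. *)
(* Input variables are anonymous, hence pairwise distinct by construction. *)
Inductive lproc : Type :=
  | LZero : lproc
  | LSucc : lproc
  | LOut  : list nat -> lproc
  | LIn   : list field -> lproc -> lproc
  | LNu   : lproc -> lproc
  | LPar  : lproc -> lproc -> lproc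
  | LRep  : lproc -> lproc.

Fixpoint nbindT (ts : list field) : nat :=
  match ts with
  | [] => 0
  | TBind :: ts => S (nbindT ts)
  | TProt _ :: ts => nbindT ts
  end.

Definition fren (r : nat -> nat) (t : field) : field :=
  match t with TBind => TBind | TProt b => TProt (r b) end.

Fixpoint lren (r : nat -> nat) (P : lproc) : lproc :=
  match P with
  | LZero => LZero
  | LSucc => LSucc
  | LOut bs => LOut (map r bs)
  | LIn ts P => LIn (map (fren r) ts) (lren (upn (nbindT ts) r) P)
  | LNu P => LNu (lren (upn 1 r) P)
  | LPar P Q => LPar (lren r P) (lren r Q)
  | LRep P => LRep (lren r P)
  end.

Fixpoint lmatch (ts : list field) (bs : list nat) : option (list nat) :=
  match ts, bs with
  | [], [] => Some []
  | TProt b :: ts, b' :: bs =>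
      if Nat.eqb b b' then lmatch ts bs else None
  | TBind :: ts, b :: bs =>
      match lmatch ts bs with Some vs => Some (b :: vs) | None => None end
  | _, _ => None
  end.

Definition linst (vs : list nat) (i : nat) : nat :=
  if i <? length vs then nth i vs 0 else i - length vs.

Inductive leq : lproc -> lproc -> Prop :=
  | leq_refl P : leq P P
  | leq_sym P Q : leq P Q -> leq Q P
  | leq_trans P Q R : leq P Q -> leq Q R -> leq P R
  | leq_par_l P P' Q : leq P P' -> leq (LPar P Q) (LPar P' Q)
  | leq_par_r P Q Q' : leq Q Q' -> leq (LPar P Q) (LPar P Q')
  | leq_rep P P' : leq P P' -> leq (LRep P) (LRep P')
  | leq_nu P P' : leq P P' -> leq (LNu P) (LNu P')
  | leq_in ts P P' : leq P P' -> leq (LIn ts P) (LIn ts P')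
  | leq_par_zero P : leq (LPar P LZero) P
  | leq_par_comm P Q : leq (LPar P Q) (LPar Q P)
  | leq_par_assoc P Q R : leq (LPar P (LPar Q R)) (LPar (LPar P Q) R)
  | leq_nu_zero : leq (LNu LZero) LZero
  | leq_nu_nu P : leq (LNu (LNu P)) (LNu (LNu (lren swap01 P)))
  | leq_rep_unfold P : leq (LRep P) (LPar P (LRep P))
  | leq_extr P Q : leq (LPar P (LNu Q)) (LNu (LPar (lren S P) Q)).

Inductive lred : lproc -> lproc -> Prop :=
  | lred_comm bs ts P vs :
      lmatch ts bs = Some vs ->
      lred (LPar (LOut bs) (LIn ts P)) (lren (linst vs) P)
  | lred_par P P' Q : lred P P' -> lred (LPar P Q) (LPar P' Q)
  | lred_nu P P' : lred P P' -> lred (LNu P) (LNu P')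
  | lred_struct P Q Q' P' : leq P Q -> lred Q Q' -> leq Q' P' -> lred P P'.

(*  The translation [[.]] : Linda -> CPC, parametrised by the fixed name c *)
(*  (c is a de Bruijn index of the current context; it is shifted under   *)
(*  binders so that it always denotes the same, never captured, name)     *)

Definition trfield (t : field) : pat :=
  match t with TBind => PBind | TProt b => PProt b end.

(* patt() = \x . c ;  patt(t, ts) = t . c . patt(ts) = (t . c) . patt(ts) *)
Fixpoint patt (c : nat) (ts : list field) : pat :=
  match ts with
  | [] => PComp PBind (PVar c)
  | t :: ts => PComp (PComp (trfield t) (PVar c)) (patt c ts)
  end.

(* patb() = c . \x ;  patb(b, bs) = b . \x . patb(bs) = (b . \x) . patb(bs) *)
Fixpoint patb (c : nat) (bs : list nat) : pat :=
  match bs with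
  | [] => PComp (PVar c) PBind
  | b :: bs => PComp (PComp (PVar b) PBind) (patb c bs)
  end.

(* In [[ (ts).P ]] the pattern patt c ts has nbindT ts + 1 binding names: *)
(* those of ts (indices 0 .. k-1) followed by the fresh x of patt()       *)
(* (index k, unused in the body); hence the body is shifted by one above  *)
(* k.                                                                     *)
Fixpoint tr (c : nat) (P : lproc) : proc :=
  match P with
  | LZero => Zero
  | LSucc => Succ
  | LOut bs => Case (patb c bs) Zero
  | LIn ts P =>
      Case (patt c ts) (ren (upn (nbindT ts) S) (tr (nbindT ts + c) P))
  | LNu P => Nu (tr (S c) P)
  | LPar P Q => Par (tr c P) (tr c Q)
  | LRep P => Rep (tr c P)
  end.

(* Main.v *)
Require Import Defs.
From Stdlib Require Import Arith List Lia.
Import ListNotations.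

Ltac occurs x y := match y with context [?z] => constr_eq z x end.
Ltac unify_args :=
  repeat match goal with
  | |- context [?f ?x] => is_var f;
      match goal with |- context [f ?y] =>
        assert_fails (constr_eq x y);
        tryif occurs x y then fail else idtac;
        replace x with y by lia end
  end.

Ltac noif t := match t with context [_ <? _] => fail 1 | context [_ =? _] => fail 1 | _ => idtac end.
Ltac arith :=
  repeat (match goal with
  | |- context[?a <? ?b] => noif a; noif b; destruct (Nat.ltb_spec a b)
  | |- context[?a =? ?b] => noif a; noif b; destruct (Nat.eqb_spec a b)
  end; cbv beta iota); try lia; try (unify_args; first [lia | reflexivity]).

Lemma upn_ext k f g : (forall i, f i = g i) -> forall i, upn k f i = upn k g i.
Proof. intros H i; unfold upn; arith; rewrite H; auto. Qed.

Lemma pren_ext f g p : (forall i, f i = g i) -> pren f p = pren g p.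
Proof. intros H; induction p; simpl; rewrite ?H; congruence. Qed.

Lemma pren_pren f g p : pren f (pren g p) = pren (fun i => f (g i)) p.
Proof. induction p; simpl; congruence. Qed.

Lemma nbind_pren f p : nbind (pren f p) = nbind p.
Proof. induction p; simpl; auto. Qed.

Lemma ren_ext X : forall f g, (forall i, f i = g i) -> ren f X = ren g X.
Proof.
  induction X; intros f g H; simpl; f_equal; auto using pren_ext, upn_ext.
Qed.

Lemma upn_comp k f g i : upn k f (upn k g i) = upn k (fun j => f (g j)) i.
Proof. unfold upn; arith. Qed.

Lemma ren_ren X : forall f g, ren f (ren g X) = ren (fun i => f (g i)) X.
Proof.
  induction X; intros f g; simpl; f_equal; auto.
  - rewrite IHX; apply ren_ext; intro; apply upn_comp.
  - apply pren_pren.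
  - rewrite IHX, nbind_pren; apply ren_ext; intro; apply upn_comp.
Qed.

Lemma upn_id k i : upn k (fun j => j) i = i.
Proof. unfold upn; arith. Qed.

Lemma pren_id p : pren (fun i => i) p = p.
Proof. induction p; simpl; congruence. Qed.

Lemma ren_id X : ren (fun i => i) X = X.
Proof.
  induction X; simpl; f_equal; auto.
  - rewrite (ren_ext _ _ (fun i => i)); auto using upn_id.
  - apply pren_id.
  - rewrite (ren_ext _ _ (fun i => i)); auto using upn_id.
Qed.

Lemma lren_ext X : forall f g, (forall i, f i = g i) -> lren f X = lren g X.
Proof.
  induction X; intros f g H; simpl; f_equal; auto using upn_ext.
  - apply map_ext; auto.
  - apply map_ext; intros []; simpl; rewrite ?H; auto.
Qed.
Lemma lren_id X : lren (fun i => i) X = X.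
Proof.
  induction X; simpl; f_equal; auto.
  - apply map_id.
  - rewrite map_ext with (g := fun t => t); [apply map_id| intros []; auto].
  - rewrite (lren_ext _ _ (fun i => i)); auto using upn_id.
  - rewrite (lren_ext _ _ (fun i => i)); auto using upn_id.
Qed.

Lemma nbindT_map f ts : nbindT (map (fren f) ts) = nbindT ts.
Proof. induction ts as [|[] ts IH]; simpl; auto. Qed.

Lemma nbind_patt c ts : nbind (patt c ts) = S (nbindT ts).
Proof. induction ts as [|[] ts IH]; simpl; lia. Qed.

Lemma pren_patt f c ts : pren f (patt c ts) = patt (f c) (map (fren f) ts).
Proof. induction ts as [|[] ts IH]; simpl; congruence. Qed.

Lemma pren_patb f c bs : pren f (patb c bs) = patb (f c) (map f bs).
Proof. induction bs; simpl; congruence. Qed.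

Lemma ren_tr P : forall f c, ren f (tr c P) = tr (f c) (lren f P).
Proof.
  induction P; intros f c; simpl; auto.
  - rewrite pren_patb; auto.
  - rewrite pren_patt, nbind_patt, nbindT_map, ren_ren.
    f_equal. rewrite (ren_ext _ _ (fun i => upn (nbindT l) S (upn (nbindT l) f i))).
    + rewrite <- ren_ren, IHP. f_equal. unfold upn; arith.
    + intro i; unfold upn; arith.
  - rewrite IHP; f_equal; unfold upn; arith.
  - rewrite IHP1, IHP2; auto.
  - rewrite IHP; auto.
Qed.

Lemma upsn_ext k f g : (forall i, f i = g i) -> forall i, upsn k f i = upsn k g i.
Proof. intros H i; unfold upsn; destruct (i <? k); rewrite ?H; auto. Qed.

Lemma psubst_ext f g p : (forall i, f i = g i) -> psubst f p = psubst g p.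
Proof. intros H; induction p; simpl; rewrite ?H; congruence. Qed.

Lemma subst_ext X : forall f g, (forall i, f i = g i) -> subst f X = subst g X.
Proof.
  induction X; intros f g H; simpl; f_equal; auto using psubst_ext, upsn_ext.
Qed.

Lemma psubst_pren s f p : psubst s (pren f p) = psubst (fun i => s (f i)) p.
Proof. induction p; simpl; congruence. Qed.

Lemma subst_ren X : forall s f, subst s (ren f X) = subst (fun i => s (f i)) X.
Proof.
  induction X; intros s f; simpl; f_equal; auto.
  - rewrite IHX; apply subst_ext; intro i; unfold upsn, upn; arith.
  - apply psubst_pren.
  - rewrite IHX, nbind_pren; apply subst_ext; intro i; unfold upsn, upn; arith.
Qed.

Lemma psubst_pvar f p : psubst (fun i => PVar (f i)) p = pren f p.
Proof. induction p; simpl; congruence. Qed.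

Lemma subst_pvar X : forall f, subst (fun i => PVar (f i)) X = ren f X.
Proof.
  induction X; intros f; simpl; f_equal; auto using psubst_pvar.
  - rewrite <- IHX; apply subst_ext; intro i; unfold upsn, upn; arith; simpl; f_equal; lia.
  - rewrite <- IHX; apply subst_ext; intro i; unfold upsn, upn; arith; simpl; f_equal; lia.
Qed.

Lemma swap_upn2 g i : swap01 (upn 1 (upn 1 g) i) = upn 1 (upn 1 g) (swap01 i).
Proof. destruct i as [|[|i]]; unfold upn; simpl; auto; arith. Qed.

Lemma ren_ceq X Y : ceq X Y -> forall g, ceq (ren g X) (ren g Y).
Proof.
  induction 1; intros g; simpl; try (constructor; auto; fail).
  - eapply ceq_trans; eauto.
  - replace (ren (upn 1 (upn 1 g)) (ren swap01 P)) with (ren swap01 (ren (upn 1 (upn 1 g)) P)).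
    + apply ceq_nu_nu.
    + rewrite !ren_ren; apply ren_ext; intro; apply swap_upn2.
  - replace (ren (upn 1 g) (ren S P)) with (ren S (ren g P)).
    + apply ceq_extr.
    + rewrite !ren_ren; apply ren_ext; intro; unfold upn; arith.
Qed.

Lemma leq_tr P Q : leq P Q -> forall c, ceq (tr c P) (tr c Q).
Proof.
  induction 1; intros c; simpl.
  - apply ceq_refl.
  - apply ceq_sym; auto.
  - eapply ceq_trans; [apply IHleq1|apply IHleq2].
  - apply ceq_par_l; auto.
  - apply ceq_par_r; auto.
  - apply ceq_rep; auto.
  - apply ceq_nu; auto.
  - apply ceq_case, ren_ceq; auto.
  - apply ceq_par_zero.
  - apply ceq_par_comm.
  - apply ceq_par_assoc.
  - apply ceq_nu_zero.
  - pose proof (ren_tr P swap01 (S (S c))) as E.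
    replace (swap01 (S (S c))) with (S (S c)) in E by reflexivity.
    rewrite <- E; apply ceq_nu_nu.
  - apply ceq_rep_unfold.
  - rewrite <- ren_tr. apply ceq_extr.
Qed.

Lemma lmatch_len ts : forall bs vs, lmatch ts bs = Some vs -> length vs = nbindT ts.
Proof.
  induction ts as [|[|b] ts IH]; intros [|b' bs] vs H; simpl in *; try discriminate.
  - injection H; intros; subst; auto.
  - destruct (lmatch ts bs) eqn:E; try discriminate. injection H; intros; subst; simpl; f_equal; eauto.
  - destruct (b =? b'); eauto; discriminate.
Qed.

Lemma unify_bt c bs : forall ts, unify (patb c bs) (patt c ts) =
  match lmatch ts bs with
  | Some vs => Some (repeat (PVar c) (S (length bs)), map PVar vs ++ [PVar c])
  | None => None end.
Proof.
  induction bs as [|b bs IH]; intros [|[|b'] ts]; simpl; auto.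
  - rewrite IH. destruct (lmatch ts bs); auto.
  - rewrite IH, Nat.eqb_sym. destruct (b' =? b); simpl; auto.
    destruct (lmatch ts bs); auto.
Qed.

Lemma unify_tb c bs : forall ts, unify (patt c ts) (patb c bs) =
  match lmatch ts bs with
  | Some vs => Some (map PVar vs ++ [PVar c], repeat (PVar c) (S (length bs)))
  | None => None end.
Proof.
  induction bs as [|b bs IH]; intros [|[|b'] ts]; simpl; auto.
  - rewrite IH. destruct (lmatch ts bs); auto.
  - rewrite IH. destruct (b' =? b); simpl; auto.
    destruct (lmatch ts bs); auto.
Qed.

Lemma unify_bb c bs : forall bs', unify (patb c bs) (patb c bs') = None.
Proof.
  induction bs as [|b bs IH]; intros [|b' bs']; simpl; auto.
  - destruct (c =? c); auto.
  - destruct (b =? b'); auto.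
Qed.

Lemma unify_tt c ts : forall ts', unify (patt c ts) (patt c ts') = None.
Proof.
  induction ts as [|[|b] ts IH]; intros [|[|b'] ts']; simpl; auto.
  - rewrite IH; destruct (b =? b'); destruct (c =? c); auto.
Qed.

Lemma inst_r vs c i : inst (map PVar vs ++ [PVar c]) i =
  PVar (if i <? length vs then nth i vs 0 else if i =? length vs then c else i - S (length vs)).
Proof.
  unfold inst. rewrite length_app, length_map. simpl.
  destruct (Nat.ltb_spec i (length vs + 1)).
  - destruct (Nat.ltb_spec i (length vs)).
    + rewrite app_nth1 by (rewrite length_map; auto).
      change (PVar 0) with (PVar (0)). rewrite map_nth. auto.
    + rewrite app_nth2 by (rewrite length_map; auto). rewrite length_map.
      replace (i - length vs) with 0 by lia. simpl. rewrite (proj2 (Nat.eqb_eq _ _)) by lia; auto.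
  - destruct (Nat.ltb_spec i (length vs)); try lia.
    destruct (Nat.eqb_spec i (length vs)); try lia. f_equal; lia.
Qed.

Lemma inst_s c n i : inst (repeat (PVar c) n) i =
  PVar (if i <? n then c else i - n).
Proof.
  unfold inst. rewrite repeat_length. destruct (i <? n) eqn:E; auto.
  apply Nat.ltb_lt in E. revert i E; induction n; intros [|i] E; simpl; auto; try lia.
  apply IHn; lia.
Qed.

Lemma dir1 P P' : lred P P' -> forall c, cred (tr c P) (tr c P').
Proof.
  induction 1; intros c.
  - simpl. eapply cred_struct; [apply ceq_refl| apply cred_comm; rewrite unify_bt, H; reflexivity|].
    simpl. eapply ceq_trans; [apply ceq_par_comm|]. eapply ceq_trans; [apply ceq_par_zero|].
    rewrite subst_ren.
    rewrite (subst_ext _ _ (fun i => PVar (linst vs i))).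
    + rewrite subst_pvar, ren_tr. apply lmatch_len in H. rewrite <- H.
      unfold linst at 1. rewrite (proj2 (Nat.ltb_ge _ _)) by lia.
      replace (length vs + c - length vs) with c by lia. apply ceq_refl.
    + intro i. rewrite inst_r. apply lmatch_len in H. rewrite <- H. unfold upn, linst. f_equal.
      arith.
  - simpl. apply cred_par; auto.
  - simpl. apply cred_nu; auto.
  - eapply cred_struct; eauto using leq_tr.
Qed.

Fixpoint nus (n : nat) (X : proc) : proc :=
  match n with 0 => X | S n => Nu (nus n X) end.

Fixpoint lnus (n : nat) (X : lproc) : lproc :=
  match n with 0 => X | S n => LNu (lnus n X) end.

Lemma nus_ceq n X Y : ceq X Y -> ceq (nus n X) (nus n Y).
Proof. induction n; simpl; auto using ceq_nu. Qed.

Lemma par_nus n : forall Z Q, ceq (Par (nus n Z) Q) (nus n (Par Z (ren (fun i => n + i) Q))).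
Proof.
  induction n; intros Z Q; simpl.
  - replace (ren _ Q) with Q; [apply ceq_refl| rewrite <- (ren_id Q) at 1; apply ren_ext; auto].
  - eapply ceq_trans; [apply ceq_par_comm|].
    eapply ceq_trans; [apply ceq_extr|]. apply ceq_nu.
    eapply ceq_trans; [apply ceq_par_comm|].
    eapply ceq_trans; [apply IHn|].
    rewrite ren_ren. rewrite (ren_ext _ (fun i => n + S i) (fun i => S (n + i))) by (intros; lia).
    apply ceq_refl.
Qed.

Lemma harmony X Y : cred X Y -> exists n p A q B R s r,
  unify p q = Some (s, r) /\
  ceq X (nus n (Par (Par (Case p A) (Case q B)) R)) /\
  ceq Y (nus n (Par (Par (subst (inst s) A) (subst (inst r) B)) R)).
Proof.
  induction 1.
  - exists 0, p, P, q, Q, Zero, s, r. simpl. repeat split; auto using ceq_sym, ceq_par_zero.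
  - destruct IHcred as (n & p & A & q & B & R & s & r & Hu & H1 & H2).
    exists n, p, A, q, B, (Par R (ren (fun i => n + i) Q)), s, r. repeat split; auto.
    + eapply ceq_trans; [apply ceq_par_l, H1|]. eapply ceq_trans; [apply par_nus|].
      apply nus_ceq, ceq_sym, ceq_par_assoc.
    + eapply ceq_trans; [apply ceq_par_l, H2|]. eapply ceq_trans; [apply par_nus|].
      apply nus_ceq, ceq_sym, ceq_par_assoc.
  - destruct IHcred as (n & p & A & q & B & R & s & r & Hu & H1 & H2).
    exists (S n), p, A, q, B, R, s, r. simpl; repeat split; auto using ceq_nu.
  - destruct IHcred as (n & p & A & q & B & R & s & r & Hu & E1 & E2).
    exists n, p, A, q, B, R, s, r. repeat split; auto.
    + eapply ceq_trans; [exact H|exact E1].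
    + eapply ceq_trans; [apply ceq_sym, H1|exact E2].
Qed.

Fixpoint dec_patb (c : nat) (p : pat) : option (list nat) :=
  match p with
  | PComp (PVar x) PBind => if x =? c then Some [] else None
  | PComp (PComp (PVar b) PBind) r =>
      match dec_patb c r with Some bs => Some (b :: bs) | None => None end
  | _ => None
  end.

Fixpoint dec_patt (c : nat) (p : pat) : option (list field) :=
  match p with
  | PComp PBind (PVar x) => if x =? c then Some [] else None
  | PComp (PComp PBind (PVar x)) r =>
      if x =? c then match dec_patt c r with Some ts => Some (TBind :: ts) | None => None end
      else None
  | PComp (PComp (PProt b) (PVar x)) r =>
      if x =? c then match dec_patt c r with Some ts => Some (TProt b :: ts) | None => None end
      else None
  | _ => None
  end.

Lemma dec_patb_sound c p : forall bs, dec_patb c p = Some bs -> p = patb c bs.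
Proof.
  induction p as [| | |p1 _ p2 IH]; intros bs H; simpl in H; try discriminate.
  destruct p1 as [|x|x|p11 p12]; try discriminate.
  - destruct p2; try discriminate. destruct (Nat.eqb_spec x c); try discriminate.
    injection H; intros; subst; reflexivity.
  - destruct p11; try discriminate. destruct p12; try discriminate.
    destruct (dec_patb c p2) eqn:E; try discriminate. injection H; intros; subst.
    simpl. rewrite (IH _ eq_refl). reflexivity.
Qed.

Lemma dec_patb_patb c bs : dec_patb c (patb c bs) = Some bs.
Proof. induction bs; simpl; [rewrite Nat.eqb_refl|rewrite IHbs]; auto. Qed.

Lemma dec_patb_patt c d ts : dec_patb d (patt c ts) = None.
Proof. destruct ts as [|[] ts]; reflexivity. Qed.

Lemma dec_patt_sound c p : forall ts, dec_patt c p = Some ts -> p = patt c ts.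
Proof.
  induction p as [| | |p1 _ p2 IH]; intros ts H; simpl in H; try discriminate.
  destruct p1 as [|x|x|p11 p12]; try discriminate.
  - destruct p2 as [|y| |]; try discriminate. destruct (Nat.eqb_spec y c); try discriminate.
    injection H; intros; subst; reflexivity.
  - destruct p11 as [| |b|]; try discriminate; destruct p12 as [|y| |]; try discriminate;
    destruct (Nat.eqb_spec y c); try discriminate;
    destruct (dec_patt c p2) eqn:E; try discriminate; injection H; intros; subst;
    simpl; rewrite (IH _ eq_refl); reflexivity.
Qed.

Lemma dec_patt_patt c ts : dec_patt c (patt c ts) = Some ts.
Proof. induction ts as [|[] ts IH]; simpl; rewrite ?Nat.eqb_refl, ?IH; auto. Qed.

Definition linv (f f' : nat -> nat) := forall i, f' (f i) = i.

Lemma linv_inj f f' x y : linv f f' -> f x = f y -> x = y.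
Proof. intros H E. rewrite <- (H x), <- (H y), E. auto. Qed.

Lemma eqb_inj f f' x y : linv f f' -> (f x =? f y) = (x =? y).
Proof.
  intros H. destruct (Nat.eqb_spec x y), (Nat.eqb_spec (f x) (f y)); subst; auto.
  exfalso. apply n. eapply linv_inj; eauto.
Qed.

Lemma dec_patb_ren f f' c p : linv f f' ->
  dec_patb (f c) (pren f p) = option_map (map f) (dec_patb c p).
Proof.
  intros Hf. induction p as [| | |p1 _ p2 IH]; simpl; auto.
  destruct p1 as [|x|x|p11 p12]; simpl; auto.
  - destruct p2; simpl; auto. rewrite (eqb_inj f f'); auto. destruct (x =? c); auto.
  - destruct p11; simpl; auto; destruct p12; simpl; auto.
    rewrite IH. destruct (dec_patb c p2); auto.
Qed.

Lemma dec_patt_ren f f' c p : linv f f' ->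
  dec_patt (f c) (pren f p) = option_map (map (fren f)) (dec_patt c p).
Proof.
  intros Hf. induction p as [| | |p1 _ p2 IH]; simpl; auto.
  destruct p1 as [|x|x|p11 p12]; simpl; auto.
  - destruct p2 as [|y| |]; simpl; auto. rewrite (eqb_inj f f'); auto. destruct (y =? c); auto.
  - destruct p11 as [| |b|]; simpl; auto; destruct p12 as [|y| |]; simpl; auto;
    rewrite (eqb_inj f f'); auto; destruct (y =? c); auto;
    rewrite IH; destruct (dec_patt c p2); auto.
Qed.

Lemma linv_upn k f f' : linv f f' -> linv (upn k f) (upn k f').
Proof. intros H i. unfold upn; arith. replace (k + f (i - k) - k) with (f (i - k)) by lia. rewrite H. lia. Qed.

Definition hh (k c i : nat) : nat := if i <? k then i else if i =? k then k + c else i - 1.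
Definition bodyf (k c n : nat) (g : nat -> nat) (i : nat) : nat := hh k c (upn n g i).

Fixpoint untrR (c : nat) (g : nat -> nat) (X : proc) : lproc :=
  match X with
  | Zero => LZero
  | Succ => LSucc
  | Par X Y => LPar (untrR c g X) (untrR c g Y)
  | Rep X => LRep (untrR c g X)
  | Nu X => LNu (untrR (S c) (upn 1 g) X)
  | Case p A =>
      match dec_patb c (pren g p) with
      | Some bs => LOut bs
      | None =>
          match dec_patt c (pren g p) with
          | Some ts => LIn ts (untrR (nbindT ts + c) (bodyf (nbindT ts) c (nbind p) g) A)
          | None => LZero
          end
      end
  end.

Lemma untrR_ext X : forall c g g', (forall i, g i = g' i) -> untrR c g X = untrR c g' X.
Proof.
  induction X; intros c g g' H; simpl; f_equal; auto using upn_ext.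
  rewrite (pren_ext g g' p H).
  destruct (dec_patb c (pren g' p)); auto.
  destruct (dec_patt c (pren g' p)); auto.
  f_equal. apply IHX. intro i; unfold bodyf; rewrite (upn_ext _ _ _ H); auto.
Qed.

Lemma untrR_ren X : forall c g f, untrR c g (ren f X) = untrR c (fun i => g (f i)) X.
Proof.
  induction X; intros c g f; simpl; f_equal; auto.
  - rewrite IHX; apply untrR_ext; intro; apply upn_comp.
  - rewrite pren_pren, nbind_pren.
    destruct (dec_patb c (pren (fun i => g (f i)) p)); auto.
    destruct (dec_patt c (pren (fun i => g (f i)) p)); auto.
    f_equal. rewrite IHX. apply untrR_ext. intro i; unfold bodyf; rewrite upn_comp; auto.
Qed.

Lemma linv_S : linv S pred.
Proof. intro; reflexivity. Qed.

Lemma linv_swap : linv swap01 swap01.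
Proof. intros [|[|i]]; reflexivity. Qed.

Lemma untrR_inj X : forall c g f f', linv f f' ->
  untrR (f c) (fun i => f (g i)) X = lren f (untrR c g X).
Proof.
  induction X; intros c g f f' Hf; simpl; f_equal; eauto.
  - rewrite <- (IHX _ _ _ _ (linv_upn 1 _ _ Hf)).
    replace (S (f c)) with (upn 1 f (S c)) by (unfold upn; arith).
    apply untrR_ext. intro; symmetry; apply upn_comp.
  - rewrite <- pren_pren. rewrite (dec_patb_ren _ _ _ _ Hf).
    destruct (dec_patb c (pren g p)) eqn:Eb; simpl; auto.
    rewrite (dec_patt_ren _ _ _ _ Hf).
    destruct (dec_patt c (pren g p)) as [ts|] eqn:Et; simpl; auto.
    apply dec_patt_sound in Et.
    assert (Hn : nbind p = S (nbindT ts)) by (rewrite <- (nbind_pren g), Et; apply nbind_patt).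
    rewrite nbindT_map, Hn. f_equal.
    rewrite <- (IHX _ _ _ _ (linv_upn (nbindT ts) _ _ Hf)).
    replace (nbindT ts + f c) with (upn (nbindT ts) f (nbindT ts + c)) by (unfold upn; arith).
    apply untrR_ext. intro i. unfold bodyf, hh, upn. arith.
Qed.

Lemma untrR_tr P : forall c g, untrR (g c) g (tr c P) = lren g P.
Proof.
  induction P; intros c g; simpl; auto.
  - rewrite pren_patb, dec_patb_patb; auto.
  - rewrite pren_patt, dec_patb_patt, dec_patt_patt, nbindT_map, nbind_patt.
    f_equal. rewrite untrR_ren.
    replace (nbindT l + g c) with (upn (nbindT l) g (nbindT l + c)) by (unfold upn; arith).
    rewrite <- (IHP (nbindT l + c) (upn (nbindT l) g)). apply untrR_ext. intro i. unfold bodyf, hh, upn. arith.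
  - f_equal. replace (S (g c)) with (upn 1 g (S c)) by (unfold upn; arith). auto.
  - f_equal; auto.
  - f_equal; auto.
Qed.

Lemma untrR_ceq X Y : ceq X Y -> forall c g, leq (untrR c g X) (untrR c g Y).
Proof.
  induction 1; intros c g; simpl.
  - apply leq_refl.
  - apply leq_sym; auto.
  - eapply leq_trans; [apply IHceq1|apply IHceq2].
  - apply leq_par_l; auto.
  - apply leq_par_r; auto.
  - apply leq_rep; auto.
  - apply leq_nu; auto.
  - destruct (dec_patb c (pren g p)); [apply leq_refl|].
    destruct (dec_patt c (pren g p)); [apply leq_in; auto|apply leq_refl].
  - apply leq_par_zero.
  - apply leq_par_comm.
  - apply leq_par_assoc.
  - apply leq_nu_zero.
  - rewrite untrR_ren.
    rewrite (untrR_ext P (S (S c)) (fun i => upn 1 (upn 1 g) (swap01 i)) (fun i => swap01 (upn 1 (upn 1 g) i))) by (intro; symmetry; apply swap_upn2).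
    replace (S (S c)) with (swap01 (S (S c))) at 2 by reflexivity.
    rewrite (untrR_inj P (S (S c)) (upn 1 (upn 1 g)) swap01 swap01 linv_swap). apply leq_nu_nu.
  - apply leq_rep_unfold.
  - rewrite untrR_ren.
    rewrite (untrR_ext P (S c) (fun i => upn 1 g (S i)) (fun i => S (g i))) by (intro; unfold upn; arith).
    rewrite (untrR_inj P c g S pred linv_S). apply leq_extr.
Qed.

Fixpoint goodR (c : nat) (g : nat -> nat) (X : proc) : Prop :=
  match X with
  | Zero => True
  | Succ => True
  | Par X Y => goodR c g X /\ goodR c g Y
  | Rep X => goodR c g X
  | Nu X => goodR (S c) (upn 1 g) X
  | Case p A =>
      match dec_patb c (pren g p) with
      | Some _ => ceq (ren (upn (nbind p) g) A) Zero
      | None =>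
          match dec_patt c (pren g p) with
          | Some ts => goodR (nbindT ts + c) (bodyf (nbindT ts) c (nbind p) g) A /\
              ceq (ren (upn (nbind p) g) A)
                  (ren (fun i => upn (nbindT ts) S (bodyf (nbindT ts) c (nbind p) g i)) A)
          | None => False
          end
      end
  end.

Lemma goodR_ext X : forall c g g', (forall i, g i = g' i) -> goodR c g X = goodR c g' X.
Proof.
  induction X as [| |X1 IHX1 X2 IHX2|X IHX|X IHX|p A IHA]; intros c g g' H; simpl; auto.
  - rewrite (IHX1 _ _ _ H), (IHX2 _ _ _ H); auto.
  - apply IHX; auto using upn_ext.
  - rewrite (pren_ext g g' p H).
    rewrite (ren_ext A (upn (nbind p) g) (upn (nbind p) g')) by (apply upn_ext; auto).
    destruct (dec_patb c (pren g' p)); auto.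
    destruct (dec_patt c (pren g' p)); auto.
    assert (E : forall i, bodyf (nbindT l) c (nbind p) g i = bodyf (nbindT l) c (nbind p) g' i)
      by (intro i; unfold bodyf; rewrite (upn_ext _ _ _ H); auto).
    rewrite (IHA _ _ _ E).
    rewrite (ren_ext A (fun i => upn (nbindT l) S (bodyf (nbindT l) c (nbind p) g i))
                       (fun i => upn (nbindT l) S (bodyf (nbindT l) c (nbind p) g' i)))
      by (intro; rewrite E; auto).
    auto.
Qed.

Lemma goodR_ren X : forall c g f, goodR c g (ren f X) = goodR c (fun i => g (f i)) X.
Proof.
  induction X as [| |X1 IHX1 X2 IHX2|X IHX|X IHX|p A IHA]; intros c g f; simpl; auto.
  - rewrite IHX1, IHX2; auto.
  - rewrite IHX; apply goodR_ext; intro; apply upn_comp.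
  - rewrite pren_pren, nbind_pren, !ren_ren.
    rewrite (ren_ext A (fun i => upn (nbind p) g (upn (nbind p) f i))
                       (upn (nbind p) (fun i => g (f i)))) by (intro; apply upn_comp).
    destruct (dec_patb c (pren (fun i => g (f i)) p)); auto.
    destruct (dec_patt c (pren (fun i => g (f i)) p)); auto.
    rewrite IHA.
    assert (E : forall i, bodyf (nbindT l) c (nbind p) g (upn (nbind p) f i) =
                          bodyf (nbindT l) c (nbind p) (fun i => g (f i)) i)
      by (intro i; unfold bodyf; rewrite upn_comp; auto).
    rewrite (goodR_ext _ _ _ _ E), ren_ren.
    rewrite (ren_ext A (fun i => upn (nbindT l) S (bodyf (nbindT l) c (nbind p) g (upn (nbind p) f i)))
                       (fun i => upn (nbindT l) S (bodyf (nbindT l) c (nbind p) (fun i => g (f i)) i)))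
      by (intro; rewrite E; auto).
    auto.
Qed.

Lemma ceq_ren_iff f f' X Y : linv f f' -> (ceq (ren f X) (ren f Y) <-> ceq X Y).
Proof.
  intros H; split; intro E; [|apply ren_ceq; auto].
  apply ren_ceq with (g := f') in E. rewrite !ren_ren in E.
  rewrite (ren_ext X _ (fun i => i)), (ren_ext Y _ (fun i => i)), !ren_id in E by auto. auto.
Qed.

Lemma goodR_inj X : forall c g f f', linv f f' ->
  (goodR (f c) (fun i => f (g i)) X <-> goodR c g X).
Proof.
  induction X as [| |X1 IHX1 X2 IHX2|X IHX|X IHX|p A IHA]; intros c g f f' Hf; simpl; try tauto.
  - rewrite (IHX1 _ _ _ _ Hf), (IHX2 _ _ _ _ Hf); tauto.
  - eauto.
  - rewrite <- (IHX (S c) (upn 1 g) (upn 1 f) (upn 1 f') (linv_upn 1 _ _ Hf)).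
    replace (S (f c)) with (upn 1 f (S c)) by (unfold upn; arith).
    rewrite (goodR_ext X (upn 1 f (S c)) (upn 1 (fun i => f (g i))) (fun i => upn 1 f (upn 1 g i))) by (intro; symmetry; apply upn_comp).
    tauto.
  - rewrite <- pren_pren. rewrite (dec_patb_ren _ _ _ _ Hf).
    assert (R1 : ren (upn (nbind p) (fun i => f (g i))) A = ren (upn (nbind p) f) (ren (upn (nbind p) g) A))
      by (rewrite ren_ren; apply ren_ext; intro; symmetry; apply upn_comp).
    destruct (dec_patb c (pren g p)) eqn:Eb; simpl.
    + rewrite R1. change Zero with (ren (upn (nbind p) f) Zero) at 1.
      apply (ceq_ren_iff _ _ _ _ (linv_upn _ _ _ Hf)).
    + rewrite (dec_patt_ren _ _ _ _ Hf).
      destruct (dec_patt c (pren g p)) as [ts|] eqn:Et; simpl; try tauto.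
      apply dec_patt_sound in Et.
      assert (Hn : nbind p = S (nbindT ts)) by (rewrite <- (nbind_pren g), Et; apply nbind_patt).
      rewrite nbindT_map, R1. rewrite Hn in *.
      rewrite <- (IHA (nbindT ts + c) (bodyf (nbindT ts) c (S (nbindT ts)) g) _ _ (linv_upn (nbindT ts) _ _ Hf)).
      replace (nbindT ts + f c) with (upn (nbindT ts) f (nbindT ts + c)) by (unfold upn; arith).
      rewrite (goodR_ext A _ (bodyf (nbindT ts) (f c) (S (nbindT ts)) (fun i => f (g i))) (fun i => upn (nbindT ts) f (bodyf (nbindT ts) c (S (nbindT ts)) g i)))
        by (intro i; unfold bodyf, hh, upn; arith).
      rewrite (ren_ext A (fun i => upn (nbindT ts) S (bodyf (nbindT ts) (f c) (S (nbindT ts)) (fun i0 => f (g i0)) i))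
         (fun i => upn (S (nbindT ts)) f (upn (nbindT ts) S (bodyf (nbindT ts) c (S (nbindT ts)) g i))))
        by (intro i; unfold bodyf, hh, upn; arith).
      rewrite <- (ren_ren A (upn (S (nbindT ts)) f)).
      rewrite (ceq_ren_iff _ _ _ _ (linv_upn _ _ _ Hf)). tauto.
Qed.

Lemma goodR_tr P : forall c g, goodR (g c) g (tr c P).
Proof.
  induction P; intros c g; simpl; auto.
  - rewrite pren_patb, dec_patb_patb. apply ceq_refl.
  - rewrite pren_patt, dec_patb_patt, dec_patt_patt, nbindT_map, nbind_patt. split.
    + rewrite goodR_ren.
      replace (nbindT l + g c) with (upn (nbindT l) g (nbindT l + c)) by (unfold upn; arith).
      rewrite (goodR_ext _ _ _ (upn (nbindT l) g)); [apply IHP|].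
      intro i; unfold bodyf, hh, upn; arith.
    + rewrite !ren_ren. rewrite (ren_ext _ (fun i => upn (S (nbindT l)) g (upn (nbindT l) S i))
        (fun i => upn (nbindT l) S (bodyf (nbindT l) (g c) (S (nbindT l)) g (upn (nbindT l) S i)))).
      * apply ceq_refl.
      * intro i; unfold bodyf, hh, upn; arith.
  - replace (S (g c)) with (upn 1 g (S c)) by (unfold upn; arith). auto.
Qed.

Lemma goodR_ceq X Y : ceq X Y -> forall c g, goodR c g X <-> goodR c g Y.
Proof.
  induction 1; intros c g; simpl.
  - tauto.
  - symmetry; auto.
  - rewrite IHceq1; auto.
  - rewrite IHceq; tauto.
  - rewrite IHceq; tauto.
  - auto.
  - auto.
  - destruct (dec_patb c (pren g p)).
    + split; intro E; (eapply ceq_trans; [|exact E]); apply ren_ceq; auto using ceq_sym.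
    + destruct (dec_patt c (pren g p)); [|tauto].
      rewrite IHceq. split; intros [E1 E2]; split; auto.
      * eapply ceq_trans; [apply ren_ceq, ceq_sym, H|]. eapply ceq_trans; [exact E2|]. apply ren_ceq, H.
      * eapply ceq_trans; [apply ren_ceq, H|]. eapply ceq_trans; [exact E2|]. apply ren_ceq, ceq_sym, H.
  - tauto.
  - tauto.
  - tauto.
  - tauto.
  - rewrite goodR_ren.
    rewrite (goodR_ext P (S (S c)) (fun i => upn 1 (upn 1 g) (swap01 i)) (fun i => swap01 (upn 1 (upn 1 g) i)))
      by (intro; symmetry; apply swap_upn2).
    replace (S (S c)) with (swap01 (S (S c))) at 2 by reflexivity.
    rewrite (goodR_inj P (S (S c)) (upn 1 (upn 1 g)) swap01 swap01 linv_swap). tauto.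
  - tauto.
  - rewrite goodR_ren.
    rewrite (goodR_ext P (S c) (fun i => upn 1 g (S i)) (fun i => S (g i))) by (intro; unfold upn; arith).
    rewrite (goodR_inj P c g S pred linv_S). tauto.
Qed.

Lemma roundtrip X : forall c g, goodR c g X -> ceq (tr c (untrR c g X)) (ren g X).
Proof.
  induction X as [| |X1 IHX1 X2 IHX2|X IHX|X IHX|p A IHA]; intros c g Hg; simpl in *.
  - apply ceq_refl.
  - apply ceq_refl.
  - destruct Hg. eapply ceq_trans; [apply ceq_par_l; eauto| apply ceq_par_r; eauto].
  - apply ceq_rep; auto.
  - apply ceq_nu; auto.
  - destruct (dec_patb c (pren g p)) as [bs|] eqn:Eb.
    + apply dec_patb_sound in Eb. simpl. rewrite <- Eb. apply ceq_case, ceq_sym, Hg.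
    + destruct (dec_patt c (pren g p)) as [ts|] eqn:Et; [|contradiction].
      apply dec_patt_sound in Et. destruct Hg as [G1 G2]. simpl.
      rewrite <- Et. apply ceq_case.
      eapply ceq_trans; [apply ren_ceq, IHA, G1|].
      rewrite ren_ren. apply ceq_sym; exact G2.
Qed.

Lemma goodR_nus n : forall c X, goodR c (fun i => i) (nus n X) <-> goodR (n + c) (fun i => i) X.
Proof.
  induction n; intros c X; simpl; [tauto|].
  rewrite (goodR_ext _ _ _ (fun i => i)) by apply upn_id.
  rewrite IHn. replace (n + S c) with (S (n + c)) by lia. tauto.
Qed.

Lemma untrR_nus n : forall c X, untrR c (fun i => i) (nus n X) = lnus n (untrR (n + c) (fun i => i) X).
Proof.
  induction n; intros c X; simpl; auto.
  rewrite (untrR_ext _ _ _ (fun i => i)) by apply upn_id.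
  rewrite IHn. replace (n + S c) with (S (n + c)) by lia. auto.
Qed.

Lemma tr_lnus n : forall c X, tr c (lnus n X) = nus n (tr (n + c) X).
Proof.
  induction n; intros c X; simpl; auto.
  rewrite IHn. replace (n + S c) with (S (n + c)) by lia. auto.
Qed.

Lemma lred_lnus n X Y : lred X Y -> lred (lnus n X) (lnus n Y).
Proof. intros H; induction n; simpl; auto using lred_nu. Qed.

Lemma out_part d m A : ceq A Zero -> ceq (subst (inst (repeat (PVar d) m)) A) Zero.
Proof.
  intros H.
  rewrite (subst_ext _ _ (fun i => PVar (if i <? m then d else i - m))) by (intro; apply inst_s).
  rewrite subst_pvar. change Zero with (ren (fun i => if i <? m then d else i - m) Zero).
  apply ren_ceq; auto.
Qed.

Lemma in_part ts vs d B : length vs = nbindT ts ->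
  goodR (nbindT ts + d) (bodyf (nbindT ts) d (S (nbindT ts)) (fun i => i)) B ->
  ceq (subst (inst (map PVar vs ++ [PVar d])) B)
      (tr d (lren (linst vs) (untrR (nbindT ts + d) (bodyf (nbindT ts) d (S (nbindT ts)) (fun i => i)) B))).
Proof.
  intros Hk G. rewrite <- Hk in *.
  assert (E : linst vs (length vs + d) = d) by (unfold linst; arith).
  rewrite <- E at 2. rewrite <- ren_tr.
  rewrite (subst_ext _ _ (fun i => PVar (linst vs (bodyf (length vs) d (S (length vs)) (fun i => i) i)))).
  - rewrite subst_pvar, <- ren_ren. apply ren_ceq, ceq_sym, roundtrip, G.
  - intro i. rewrite inst_r. f_equal. unfold linst, bodyf, hh, upn. arith.
Qed.

Lemma ren_upn_id k X : ren (upn k (fun i => i)) X = X.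
Proof. rewrite (ren_ext _ _ (fun i => i)) by apply upn_id. apply ren_id. Qed.

Lemma redex d p A q B s r : goodR d (fun i => i) (Case p A) -> goodR d (fun i => i) (Case q B) ->
  unify p q = Some (s, r) ->
  exists W, lred (LPar (untrR d (fun i => i) (Case p A)) (untrR d (fun i => i) (Case q B))) W /\
     ceq (Par (subst (inst s) A) (subst (inst r) B)) (tr d W).
Proof.
  intros Hp Hq Hu. simpl in Hp, Hq |- *. rewrite !pren_id in *.
  rewrite ?ren_upn_id in Hp, Hq.
  destruct (dec_patb d p) as [bs|] eqn:Eb.
  - apply dec_patb_sound in Eb; subst p.
    destruct (dec_patb d q) as [bs'|] eqn:Eb'.
    { apply dec_patb_sound in Eb'; subst q; rewrite unify_bb in Hu; discriminate. }
    destruct (dec_patt d q) as [ts|] eqn:Et; [|contradiction].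
    apply dec_patt_sound in Et; subst q. rewrite unify_bt in Hu.
    destruct (lmatch ts bs) as [vs|] eqn:Hm; [|discriminate].
    injection Hu; intros; subst s r.
    rewrite nbind_patt in *. destruct Hq as [G1 G2].
    eexists. split; [apply lred_comm; exact Hm|].
    eapply ceq_trans; [apply ceq_par_l, (out_part d (S (length bs))), Hp|].
    eapply ceq_trans; [apply ceq_par_comm|]. eapply ceq_trans; [apply ceq_par_zero|].
    apply in_part; auto. eapply lmatch_len; eauto.
  - destruct (dec_patt d p) as [ts|] eqn:Et; [|contradiction].
    apply dec_patt_sound in Et; subst p.
    destruct (dec_patb d q) as [bs|] eqn:Eb'.
    + apply dec_patb_sound in Eb'; subst q. rewrite unify_tb in Hu.
      destruct (lmatch ts bs) as [vs|] eqn:Hm; [|discriminate].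
      injection Hu; intros; subst s r.
      rewrite nbind_patt in *. destruct Hp as [G1 G2].
      eexists. split.
      * eapply lred_struct; [apply leq_par_comm| apply lred_comm; exact Hm| apply leq_refl].
      * eapply ceq_trans; [apply ceq_par_r, (out_part d (S (length bs))), Hq|].
        eapply ceq_trans; [apply ceq_par_zero|].
        apply in_part; auto. eapply lmatch_len; eauto.
    + destruct (dec_patt d q) as [ts'|] eqn:Et'; [|contradiction].
      apply dec_patt_sound in Et'; subst q. rewrite unify_tt in Hu; discriminate.
Qed.

Theorem theorem4p8 (c : nat) (P : lproc) :
  (forall P' : lproc, lred P P' -> cred (tr c P) (tr c P')) /\
  (forall Q : proc, cred (tr c P) Q ->
     exists P' : lproc, lred P P' /\ ceq Q (tr c P')).
Proof.
  split.
  - intros P' H; apply dir1; auto.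
  - intros Q HQ.
    destruct (harmony _ _ HQ) as (n & p & A & q & B & R & s & r & Hu & H1 & H2).
    pose proof (goodR_tr P c (fun i => i)) as Gt. cbv beta in Gt.
    apply (goodR_ceq _ _ H1) in Gt. apply goodR_nus in Gt.
    simpl in Gt. destruct Gt as [[Gp Gq] GR].
    destruct (redex (n + c) p A q B s r) as (W & HW1 & HW2).
    { simpl. exact Gp. }
    { simpl. exact Gq. }
    { exact Hu. }
    exists (lnus n (LPar W (untrR (n + c) (fun i => i) R))). split.
    + pose proof (untrR_ceq _ _ H1 c (fun i => i)) as HL.
      pose proof (untrR_tr P c (fun i => i)) as E. cbv beta in E.
      rewrite E, lren_id, untrR_nus in HL.
      eapply lred_struct; [exact HL| |apply leq_refl].
      apply lred_lnus.
      change (lred (LPar (LPar (untrR (n+c) (fun i => i) (Case p A)) (untrR (n+c) (fun i=>i) (Case q B)))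
                         (untrR (n+c) (fun i=>i) R))
                   (LPar W (untrR (n+c) (fun i=>i) R))).
      apply lred_par, HW1.
    + rewrite tr_lnus. simpl. eapply ceq_trans; [exact H2|]. apply nus_ceq.
      eapply ceq_trans; [apply ceq_par_l, HW2|]. apply ceq_par_r.
      pose proof (roundtrip R (n + c) (fun i => i) GR) as RT. rewrite ren_id in RT.
      apply ceq_sym, RT.
Qed.
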